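(* On finite open graphs, the relation $\preceq$ is a well-founded, confluent partial order up to graph isomorphism. That is: (i) $G \preceq G$; if $K \preceq H$ and $H \preceq G$ then $K \preceq G$; if $H \preceq G$ and $G \preceq H$ then $G \cong H$; (ii) there is no infinite sequence $G_0 \succ G_1 \succ G_2 \succ \cdots$ in which each $G_{i+1} \preceq G_i$ with $G_{i+1} \not\cong G_i$; (iii) if $H_1 \preceq G$ and $H_2 \preceq G$, then there is an open graph $K$ with $K \preceq H_1$ and $K \preceq H_2$.
   Context: A pre-open graph $G$ consists of a set $E_G$ of edges, two disjoint sets $V_G$ (vertices) and $\epsilon_G$ (edge points), and two maps $s_G, t_G : E_G \to V_G \sqcup \epsilon_G$ (source and target). A morphism $f: G \to H$ of pre-open graphs consists of a map $E_G \to E_H$ and a map $V_G \sqcup \epsilon_G \to V_H \sqcup \epsilon_H$ sending $V_G$ into $V_H$ and $\epsilon_G$ into $\epsilon_H$, commuting with sources and targets. A pre-open graph is an open graph if the restriction of $s_G$ to $s_G^{-1}(\epsilon_G)$ and the restriction of $t_G$ to $t_G^{-1}(\epsilon_G)$ are injective (so each edge point has at most one incoming and at most one outgoing edge). It is finite if $E_G, V_G, \epsilon_G$ are finite. Contraction: given an edge point $p$ with an in-edge $e_1$ from $x_1$ to $p$ and an out-edge $e_2 \neq e_1$ from $p$ to $x_2$ (where $x_1,x_2 \in V_G \sqcup \epsilon_G$ need not be distinct), one may replace $e_1, p, e_2$ by a single new edge $e_3$ from $x_1$ to $x_2$. We say $G$ contracts to $H$, written $H \preceq G$, if $H$ is isomorphic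 to a graph obtained from $G$ by performing any number (possibly zero) of such replacements. *)

(* Defs.v *)
From mathcomp Require Import all_boot.
Set Implicit Arguments. Unset Strict Implicit. Unset Printing Implicit Defensive.

(** A finite pre-open graph: finite sets of edges, vertices and edge points
    (vertices and edge points are disjoint: they are the two summands of
    [vert + epoint]), with source and target maps. *)
Record graph := Graph {
  edge : finType;
  vert : finType;
  epoint : finType;
  src : edge -> (vert + epoint)%type;
  tgt : edge -> (vert + epoint)%type }.

Definition open_graph (G : graph) : Prop :=
  (forall (e e' : edge G) (p : epoint G),
      src e = inr p -> src e' = inr p -> e = e') /\
  (forall (e e' : edge G) (p : epoint G),
      tgt e = inr p -> tgt e' = inr p -> e = e').

Definition map_end (V P V' P' : Type) (fV : V -> V') (fP : P -> P')
  (x : (V + P)%type) : (V' + P')%type :=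
  match x with inl v => inl (fV v) | inr p => inr (fP p) end.

Definition iso (G H : graph) : Prop :=
  exists (fE : edge G -> edge H) (fV : vert G -> vert H)
         (fP : epoint G -> epoint H),
    [/\ bijective fE, bijective fV, bijective fP &
      forall e, src (fE e) = map_end fV fP (src e) /\
                tgt (fE e) = map_end fV fP (tgt e)].

(** Data for one contraction: an edge point p, its in-edge e1 (ending at p)
    and its out-edge e2 (starting at p), e1 <> e2, and these are the only
    edges incident to p (automatic in an open graph). *)
Record cdata (G : graph) := CData {
  cp : epoint G;
  ce1 : edge G;
  ce2 : edge G;
  c_in : tgt ce1 = inr cp;
  c_out : src ce2 = inr cp;
  c_ne : ce1 != ce2;
  c_in_uniq : forall e, tgt e = inr cp -> e = ce1;
  c_out_uniq : forall e, src e = inr cp -> e = ce2 }.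

Section Contract.
Variables (G : graph) (d : cdata G).

Definition c_edge := ({e : edge G | (e != ce1 d) && (e != ce2 d)} + unit)%type.
Definition c_epoint := {q : epoint G | q != cp d}.

Lemma inr_neq (q : epoint G) :
  (inr q : (vert G + epoint G)%type) != inr (cp d) -> q != cp d.
Proof. by apply: contra => /eqP ->. Qed.

Definition c_proj (x : (vert G + epoint G)%type) :
  x != inr (cp d) -> (vert G + c_epoint)%type :=
  match x as y return y != inr (cp d) -> (vert G + c_epoint)%type with
  | inl v => fun _ => inl v
  | inr q => fun h => inr (exist _ q (inr_neq h))
  end.

Lemma src_old (e : {e : edge G | (e != ce1 d) && (e != ce2 d)}) :
  src (val e) != inr (cp d).
Proof.
case: e => e /= /andP [_ h2]; apply/eqP => h.
by move: h2; rewrite (c_out_uniq h) eqxx.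
Qed.

Lemma tgt_old (e : {e : edge G | (e != ce1 d) && (e != ce2 d)}) :
  tgt (val e) != inr (cp d).
Proof.
case: e => e /= /andP [h1 _]; apply/eqP => h.
by move: h1; rewrite (c_in_uniq h) eqxx.
Qed.

Lemma src_e1 : src (ce1 d) != inr (cp d).
Proof.
apply/eqP => h; move: (c_ne d); by rewrite (c_out_uniq h) eqxx.
Qed.

Lemma tgt_e2 : tgt (ce2 d) != inr (cp d).
Proof.
apply/eqP => h; move: (c_ne d); by rewrite (c_in_uniq h) eqxx.
Qed.

(** The new edge e3 (the [inr tt] edge) goes from the source of e1 to the
    target of e2; e1, e2 and p are removed. *)
Definition c_src (x : c_edge) : (vert G + c_epoint)%type :=
  match x with inl e => c_proj (src_old e) | inr _ => c_proj src_e1 end.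
Definition c_tgt (x : c_edge) : (vert G + c_epoint)%type :=
  match x with inl e => c_proj (tgt_old e) | inr _ => c_proj tgt_e2 end.

Definition contract : graph :=
  @Graph c_edge (vert G) c_epoint c_src c_tgt.
End Contract.

Inductive reaches (G : graph) : graph -> Prop :=
| reaches_refl : reaches G G
| reaches_step (H : graph) (d : cdata H) : reaches G H -> reaches G (contract d).

Definition preceq (H G : graph) : Prop := exists G', reaches G G' /\ iso H G'.

(* Main.v *)
Require Import Defs.
From mathcomp Require Import all_boot.
From Stdlib Require Import Setoid.
Set Implicit Arguments. Unset Strict Implicit. Unset Printing Implicit Defensive.

Lemma map_end_inj V P V' P' (fV : V -> V') (fP : P -> P') :
  injective fV -> injective fP -> injective (map_end fV fP).
Proof. by move=> iV iP [x|x] [y|y] //= [] => [/iV|/iP] ->. Qed.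

Lemma map_end_comp V P V' P' V'' P'' (f1 : V -> V') (f2 : P -> P')
  (g1 : V' -> V'') (g2 : P' -> P'') x :
  map_end g1 g2 (map_end f1 f2 x) = map_end (g1 \o f1) (g2 \o f2) x.
Proof. by case: x. Qed.

Lemma map_end_ext V P V' P' (f1 g1 : V -> V') (f2 g2 : P -> P') x :
  f1 =1 g1 -> f2 =1 g2 -> map_end f1 f2 x = map_end g1 g2 x.
Proof. by case: x => y /= h1 h2; rewrite ?h1 ?h2. Qed.

Lemma card_c_edge G (d : cdata G) : #|{: c_edge d}| = #|edge G|.-1.
Proof.
rewrite /c_edge card_sum card_unit card_sig.
have := cardD1 (ce2 d) (predC1 (ce1 d)); rewrite cardC1 inE eq_sym (c_ne d) /=.
move=> ->; rewrite addnC; congr (_ + _); apply: eq_card => x; rewrite !inE andbC.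
done.
Qed.

Lemma card_c_epoint G (d : cdata G) : #|{: c_epoint d}| = #|epoint G|.-1.
Proof. by rewrite /c_epoint card_sig -(cardC1 (cp d)); apply: eq_card. Qed.

Lemma card_c_edge_lt G (d : cdata G) : #|{: c_edge d}| < #|edge G|.
Proof.
rewrite card_c_edge; have : 0 < #|edge G| by apply/card_gt0P; exists (ce1 d).
by case: #|edge G|.
Qed.

Lemma iso_refl G : iso G G.
Proof.
exists id, id, id; split; try by exists id.
by move=> e; case: (src e); case: (tgt e).
Qed.

Lemma map_end_id V P (fV : V -> V) (fP : P -> P) x :
  fV =1 id -> fP =1 id -> map_end fV fP x = x.
Proof. by case: x => y /= h1 h2; rewrite ?h1 ?h2. Qed.

Lemma iso_sym G H : iso G H -> iso H G.
Proof.
case=> fE [fV [fP [[gE E1 E2] [gV V1 V2] [gP P1 P2] Hc]]].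
exists gE, gV, gP; split; [by exists fE | by exists fV | by exists fP|].
move=> e; have iM := map_end_inj (can_inj V1) (can_inj P1).
split; apply: iM; rewrite map_end_comp map_end_id // -?(proj1 (Hc _)) -?(proj2 (Hc _)) E2 //.
Qed.

Lemma iso_trans G H K : iso G H -> iso H K -> iso G K.
Proof.
case=> fE [fV [fP [bE bV bP Hc]]]; case=> gE [gV [gP [cE cV cP Hc']]].
exists (gE \o fE), (gV \o fV), (gP \o fP); split; try exact: bij_comp.
move=> e /=; rewrite (proj1 (Hc' _)) (proj2 (Hc' _)) (proj1 (Hc _)) (proj2 (Hc _)).
by rewrite !map_end_comp.
Qed.

Lemma iso_card_edge G H : iso G H -> #|edge G| = #|edge H|.
Proof. by case=> fE [fV [fP [bE _ _ _]]]; exact: bij_eq_card bE. Qed.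

Lemma reaches_trans G H K : reaches G H -> reaches H K -> reaches G K.
Proof. by move=> hGH; elim=> [|K' d _ IH] //; exact: reaches_step. Qed.

Lemma reaches_first G H : reaches G H ->
  G = H \/ exists d : cdata G, reaches (contract d) H.
Proof.
elim=> [|H' d _ [E|[d' hd]]]; first by left.
- by subst H'; right; exists d; exact: reaches_refl.
- by right; exists d'; exact: reaches_step.
Qed.

Lemma reaches_le G H : reaches G H -> #|edge H| <= #|edge G|.
Proof.
elim=> // H' d _ IH; apply: leq_trans IH; apply: ltnW; exact: card_c_edge_lt.
Qed.

Lemma reaches_eq G H : reaches G H -> #|edge H| = #|edge G| -> G = H.
Proof.
case/reaches_first => [//|[d hd]] he.
have := leq_ltn_trans (reaches_le hd) (card_c_edge_lt d).
by rewrite he ltnn.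
Qed.

Record real (G H : graph) := Real {
  rV : vert H -> vert G; rP : epoint H -> epoint G;
  rF : edge H -> edge G; rL : edge H -> edge G;
  rV_bij : bijective rV; rP_inj : injective rP;
  rF_inj : injective rF; rL_inj : injective rL;
  rsrc : forall e, src (rF e) = map_end rV rP (src e);
  rtgt : forall e, tgt (rL e) = map_end rV rP (tgt e) }.

Lemma iso_inj G H (fE : edge G -> edge H) (fV : vert G -> vert H)
  (fP : epoint G -> epoint H) :
  injective fE -> bijective fV -> injective fP ->
  #|edge G| = #|edge H| -> #|epoint G| = #|epoint H| ->
  (forall e, src (fE e) = map_end fV fP (src e) /\
             tgt (fE e) = map_end fV fP (tgt e)) -> iso G H.
Proof.
move=> iE bV iP cE cP Hc; exists fE, fV, fP; split => //.
- by apply: inj_card_bij; rewrite ?cE.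
- by apply: inj_card_bij; rewrite ?cP.
Qed.

Lemma real_iso_tw G H1 H2 (r1 : real G H1) (r2 : real G H2)
  (tau : (vert G + epoint G)%type -> (vert G + epoint G)%type)
  (fE : edge H1 -> edge H2) (fP : epoint H1 -> epoint H2) :
  #|edge H1| = #|edge H2| -> #|epoint H1| = #|epoint H2| ->
  injective fE -> injective fP ->
  (forall v, tau (inl v) = inl v) ->
  (forall q, inr (rP r2 (fP q)) = tau (inr (rP r1 q))) ->
  (forall e, src (rF r2 (fE e)) = tau (src (rF r1 e)) /\
             tgt (rL r2 (fE e)) = tau (tgt (rL r1 e))) -> iso H1 H2.
Proof.
move=> cE cP iE iP tV tP Hc.
case: (@rV_bij _ _ r2) => iV2 K1 K2.
apply: (@iso_inj _ _ fE (iV2 \o rV r1) fP) => //.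
  apply: bij_comp; last exact: rV_bij.
  by exists (rV r2).
have iM := map_end_inj (bij_inj (@rV_bij _ _ r2)) (@rP_inj _ _ r2).
have key x : map_end (rV r2) (rP r2) (map_end (iV2 \o rV r1) fP x) =
   tau (map_end (rV r1) (rP r1) x).
  by case: x => y /=; rewrite ?K2 ?tV ?tP.
move=> e; split; apply: iM; rewrite key -?rsrc -?rtgt;
  [case: (Hc e) => <- _ | case: (Hc e) => _ <-]; by rewrite ?rsrc ?rtgt.
Qed.

Definition hasE G H (r : real G H) g h := exists e, rF r e = g /\ rL r e = h.
Definition hasP G H (r : real G H) x := exists q, rP r q = x.

Lemma real_iso G H1 H2 (r1 : real G H1) (r2 : real G H2) :
  #|edge H1| = #|edge H2| -> #|epoint H1| = #|epoint H2| ->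
  (forall g h, hasE r1 g h -> hasE r2 g h) ->
  (forall x, hasP r1 x -> hasP r2 x) -> iso H1 H2.
Proof.
move=> cE cP hE hP.
have exE e : exists e', (rF r2 e' == rF r1 e) && (rL r2 e' == rL r1 e).
  have [e' [E1 E2]] : hasE r2 (rF r1 e) (rL r1 e) by apply: hE; exists e.
  by exists e'; rewrite E1 E2 !eqxx.
have exP q : exists q', rP r2 q' == rP r1 q.
  have [q' E] : hasP r2 (rP r1 q) by apply: hP; exists q.
  by exists q'; rewrite E.
pose fE e := xchoose (exE e); pose fP q := xchoose (exP q).
have fEP e : rF r2 (fE e) = rF r1 e /\ rL r2 (fE e) = rL r1 e.
  by have /andP[/eqP -> /eqP ->] := xchooseP (exE e).
have fPP q : rP r2 (fP q) = rP r1 q by apply/eqP; exact: xchooseP (exP q).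
apply: (@real_iso_tw _ _ _ r1 r2 id fE fP) => //.
- by move=> e e' h; apply: (@rF_inj _ _ r1); rewrite -!(proj1 (fEP _)) h.
- by move=> q q' h; apply: (@rP_inj _ _ r1); rewrite -!fPP h.
- by move=> q; rewrite fPP.
- by move=> e; rewrite (proj1 (fEP e)) (proj2 (fEP e)).
Qed.

Definition real_id G : real G G.
Proof.
refine (@Real G G id id id id _ _ _ _ _ _) => //; try by exists id.
- by move=> e; rewrite map_end_id.
- by move=> e; rewrite map_end_id.
Defined.

Section RC.
Variables (G H : graph) (r : real G H) (d : cdata H).

Definition rcP (q : c_epoint d) : epoint G := rP r (val q).
Definition rcF (x : c_edge d) : edge G :=
  match x with inl e => rF r (val e) | inr _ => rF r (ce1 d) end.
Definition rcL (x : c_edge d) : edge G :=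
  match x with inl e => rL r (val e) | inr _ => rL r (ce2 d) end.

Lemma c_proj_map (x : (vert H + epoint H)%type) (h : x != inr (cp d)) :
  map_end (rV r) rcP (c_proj h) = map_end (rV r) (rP r) x.
Proof. by case: x h. Qed.

Lemma rcP_inj : injective rcP.
Proof. by move=> q q' /(@rP_inj _ _ r) /val_inj. Qed.

Lemma sig_ne (e : {e : edge H | (e != ce1 d) && (e != ce2 d)}) :
  (sval e != ce1 d) && (sval e != ce2 d).
Proof. exact: (valP e). Qed.

Lemma rcF_inj : injective rcF.
Proof.
have iF := @rF_inj _ _ r.
case=> [e|[]] [e'|[]] //= => [/iF/val_inj->//| |].
- by move/iF => E; move: (sig_ne e); rewrite E eqxx.
- by move/iF => E; move: (sig_ne e'); rewrite -E eqxx.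
Qed.

Lemma rcL_inj : injective rcL.
Proof.
have iF := @rL_inj _ _ r.
case=> [e|[]] [e'|[]] //= => [/iF/val_inj->//| |].
- by move/iF => E; move: (sig_ne e); rewrite E eqxx andbF.
- by move/iF => E; move: (sig_ne e'); rewrite -E eqxx andbF.
Qed.

Definition real_contract : real G (contract d).
Proof.
refine (@Real G (contract d) (rV r) rcP rcF rcL (@rV_bij _ _ r) rcP_inj rcF_inj rcL_inj _ _).
- by case=> [e|[]] /=; rewrite c_proj_map rsrc.
- by case=> [e|[]] /=; rewrite c_proj_map rtgt.
Defined.

Lemma hasE_contract g h : hasE real_contract g h <->
  (hasE r g h /\ g != rF r (ce1 d) /\ g != rF r (ce2 d)) \/
  (g = rF r (ce1 d) /\ h = rL r (ce2 d)).
Proof.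
have iF := @rF_inj _ _ r.
split.
- case=> [[e|[]] [<- <-]] /=; last by right.
  left; split; first by exists (val e).
  case/andP: (sig_ne e) => h1 h2; split; [apply: contra_neq h1|apply: contra_neq h2];
  exact: iF.
- case=> [[[e [<- <-]] [h1 h2]]|[-> ->]]; last by exists (inr tt).
  have P : (e != ce1 d) && (e != ce2 d).
    by apply/andP; split; [apply: contra_neq h1|apply: contra_neq h2] => ->.
  by exists (inl (exist _ e P)).
Qed.

Lemma hasP_contract x : hasP real_contract x <->
  hasP r x /\ x != rP r (cp d).
Proof.
split.
- case=> q <-; split; first by exists (val q).
  by apply: contra_neq (valP q) => /(@rP_inj _ _ r).
- case=> [[q <-] h]; have P : q != cp d by apply: contra_neq h => ->.
  by exists (exist _ q P).
Qed.
End RC.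

Lemma hasE_id G g h : hasE (real_id G) g h <-> g = h.
Proof. by split; [case=> e [<- <-]|move=> ->; exists h]. Qed.

Lemma hasP_id G x : hasP (real_id G) x.
Proof. by exists x. Qed.

Lemma card_contract_edge G (d : cdata G) : #|edge (contract d)| = #|edge G|.-1.
Proof. exact: card_c_edge. Qed.
Lemma card_contract_epoint G (d : cdata G) : #|epoint (contract d)| = #|epoint G|.-1.
Proof. exact: card_c_epoint. Qed.

Lemma iso_contract G G' (d : cdata G) : iso G G' ->
  exists d' : cdata G', iso (contract d) (contract d').
Proof.
case=> fE [fV [fP [bE bV bP Hc]]].
have iE := bij_inj bE; have iP := bij_inj bP.
case: (bE) => gE E1 E2.
pose r0 := @Real G' G fV fP fE fE bV iP iE iE (fun e => proj1 (Hc e)) (fun e => proj2 (Hc e)).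
have cin : tgt (fE (ce1 d)) = inr (fP (cp d)) by rewrite (proj2 (Hc _)) c_in.
have cout : src (fE (ce2 d)) = inr (fP (cp d)) by rewrite (proj1 (Hc _)) c_out.
have cne : fE (ce1 d) != fE (ce2 d) by rewrite (inj_eq iE) c_ne.
have cinu e : tgt e = inr (fP (cp d)) -> e = fE (ce1 d).
  rewrite -(E2 e) (proj2 (Hc _)); case E: (tgt (gE e)) => [v|q] //= [/iP qE].
  by rewrite (@c_in_uniq _ d (gE e)) // E qE.
have coutu e : src e = inr (fP (cp d)) -> e = fE (ce2 d).
  rewrite -(E2 e) (proj1 (Hc _)); case E: (src (gE e)) => [v|q] //= [/iP qE].
  by rewrite (@c_out_uniq _ d (gE e)) // E qE.
pose d' := CData cin cout cne cinu coutu.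
exists d'.
apply: (@real_iso _ _ _ (real_contract r0 d) (real_contract (real_id G') d')).
- by rewrite !card_contract_edge (bij_eq_card bE).
- by rewrite !card_contract_epoint (bij_eq_card bP).
- move=> g h /hasE_contract [[[e [<- <-]] [h1 h2]] | [-> ->]]; apply/hasE_contract.
    by left; split; [apply/hasE_id|split].
  by right.
- move=> x /hasP_contract [_ h]; apply/hasP_contract; split => //; exact: hasP_id.
Qed.

Lemma reaches_iso G G' H : iso G G' -> reaches G H ->
  exists H', reaches G' H' /\ iso H H'.
Proof.
move=> hi; elim=> [|H0 d _ [H0' [hr hi']]]; first by exists G'; split => //; exact: reaches_refl.
have [d' hd'] := iso_contract d hi'.
by exists (contract d'); split => //; exact: reaches_step.
Qed.

Lemma open_contract G (d : cdata G) : open_graph G -> open_graph (contract d).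
Proof.
case=> hs ht; pose r := real_contract (real_id G) d.
split=> e e' p E1 E2.
- apply: (@rF_inj _ _ r); apply: (hs _ _ (val p)).
    by have := rsrc r e; rewrite E1 => ->.
  by have := rsrc r e'; rewrite E2 => ->.
- apply: (@rL_inj _ _ r); apply: (ht _ _ (val p)).
    by have := rtgt r e; rewrite E1 => ->.
  by have := rtgt r e'; rewrite E2 => ->.
Qed.

Lemma open_reaches G H : open_graph G -> reaches G H -> open_graph H.
Proof. by move=> hG; elim=> // H' d _; exact: open_contract. Qed.

Definition rI G (d : cdata G) := real_contract (real_id G) d.

Lemma rI_src G (d : cdata G) x y :
  src (rF (rI d) x) = map_end (rV (rI d)) (rP (rI d)) y -> src x = y.
Proof.
move=> h; apply: (map_end_inj (bij_inj (@rV_bij _ _ (rI d))) (@rP_inj _ _ (rI d))).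
by rewrite -(rsrc (rI d)).
Qed.

Lemma rI_tgt G (d : cdata G) x y :
  tgt (rL (rI d) x) = map_end (rV (rI d)) (rP (rI d)) y -> tgt x = y.
Proof.
move=> h; apply: (map_end_inj (bij_inj (@rV_bij _ _ (rI d))) (@rP_inj _ _ (rI d))).
by rewrite -(rtgt (rI d)).
Qed.

Definition lift_e G (d : cdata G) (e : edge G) : c_edge d :=
  match (insub e : option {e : edge G | (e != ce1 d) && (e != ce2 d)}) with
  | Some x => inl x | None => inr tt end.

Lemma rF_lift G (d : cdata G) e :
  rF (rI d) (lift_e d e) = if (e != ce1 d) && (e != ce2 d) then e else ce1 d.
Proof.
rewrite /lift_e; case: insubP => [u hu E|hn] /=; first by rewrite hu -E.
by rewrite (negbTE hn).
Qed.

Lemma rL_lift G (d : cdata G) e :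
  rL (rI d) (lift_e d e) = if (e != ce1 d) && (e != ce2 d) then e else ce2 d.
Proof.
rewrite /lift_e; case: insubP => [u hu E|hn] /=; first by rewrite hu -E.
by rewrite (negbTE hn).
Qed.

Lemma same_cp G (d1 d2 : cdata G) : cp d1 = cp d2 -> iso (contract d1) (contract d2).
Proof.
move=> hp.
have e1 : ce1 d1 = ce1 d2 by apply: c_in_uniq; rewrite c_in hp.
have e2 : ce2 d1 = ce2 d2 by apply: c_out_uniq; rewrite c_out hp.
apply: (@real_iso _ _ _ (rI d1) (rI d2)).
- by rewrite !card_contract_edge.
- by rewrite !card_contract_epoint.
- move=> g h /hasE_contract H; apply/hasE_contract; by rewrite -e1 -e2.
- move=> x /hasP_contract H; apply/hasP_contract; by rewrite -hp.
Qed.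

Lemma sigp_ne G (d : cdata G) (x : c_epoint d) : sval x != cp d.
Proof. exact: (valP x). Qed.

Lemma c_ep_inj G (d : cdata G) (x y : c_epoint d) : sval x = sval y -> x = y.
Proof. exact: val_inj. Qed.

Lemma cycle_iso G (d1 d2 : cdata G) : cp d1 != cp d2 ->
  ce2 d1 = ce1 d2 -> ce1 d1 = ce2 d2 -> iso (contract d1) (contract d2).
Proof.
move=> hp hb ha.
pose tau (y : (vert G + epoint G)%type) :=
  if y == inr (cp d2) then (inr (cp d1) : (vert G + epoint G)%type) else y.
have pP (x : c_epoint d1) : (if val x == cp d2 then cp d1 else val x) != cp d2.
  by case: (val x =P cp d2) => [_|/eqP].

pose fP (x : c_epoint d1) : c_epoint d2 := exist (fun q => q != cp d2) _ (pP x).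
have pE (e : {e : edge G | (e != ce1 d1) && (e != ce2 d1)}) :
  (sval e != ce1 d2) && (sval e != ce2 d2).
  by rewrite -hb -ha andbC; exact: (sig_ne e).
pose fE (x : c_edge d1) : c_edge d2 :=
  match x with inl e => inl (exist (fun e => (e != ce1 d2) && (e != ce2 d2)) _ (pE e)) | inr t => inr t end.
apply: (@real_iso_tw _ _ _ (rI d1) (rI d2) tau fE fP).
- by rewrite !card_contract_edge.
- by rewrite !card_contract_epoint.
- by case=> [e|[]] [e'|[]] //= [] /val_inj ->.
- move=> x y [] /=; case: eqP; case: eqP => // hx hy.
  + by move=> _; apply: c_ep_inj; rewrite hx hy.
  + by move=> E; move: (sigp_ne y); rewrite -E eqxx.
  + by move=> E; move: (sigp_ne x); rewrite E eqxx.
  + by move=> E; apply: c_ep_inj.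
- by [].
- move=> q /=; rewrite /tau /=; case: eqP => [->|]; first by rewrite eqxx.
  by case: eqP => // [[]].
- case=> [e|[]] /=.
  + case/andP: (sig_ne e) => n1 n2.
    rewrite /tau; case: eqP => [/c_out_uniq E|_]; first by move: n1; rewrite E -ha eqxx.
    case: eqP => [/c_in_uniq E|_] //; by move: n2; rewrite E -hb eqxx.
  + by rewrite -hb c_out ha c_out -ha c_in hb c_in /tau eqxx.
Qed.

Lemma in_ne G (d1 d2 : cdata G) : cp d1 != cp d2 -> ce1 d1 != ce1 d2.
Proof. by move=> hp; apply: contra_neq hp => E; move: (c_in d1); rewrite E c_in => -[]. Qed.

Lemma out_ne G (d1 d2 : cdata G) : cp d1 != cp d2 -> ce2 d1 != ce2 d2.
Proof. by move=> hp; apply: contra_neq hp => E; move: (c_out d1); rewrite E c_out => -[]. Qed.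

Lemma step_data G (d1 d2 : cdata G) : cp d2 != cp d1 ->
  ~~ ((ce2 d1 == ce1 d2) && (ce1 d1 == ce2 d2)) ->
  exists d2' : cdata (contract d1),
  [/\ rF (rI d1) (ce1 d2') = (if ce1 d2 == ce2 d1 then ce1 d1 else ce1 d2),
      rF (rI d1) (ce2 d2') = ce2 d2,
      rL (rI d1) (ce2 d2') = (if ce2 d2 == ce1 d1 then ce2 d1 else ce2 d2) &
      rP (rI d1) (cp d2') = cp d2].
Proof.
move=> hp hnc.
have ca : ce1 d2 != ce1 d1 by apply: in_ne.
have db : ce2 d2 != ce2 d1 by apply: out_ne.
set c := ce1 d2 in ca hnc *; set dd := ce2 d2 in db hnc *.
have Lc : rL (rI d1) (lift_e d1 c) = c.
  by rewrite rL_lift ca /=; case: eqP.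
have Fd : rF (rI d1) (lift_e d1 dd) = dd.
  by rewrite rF_lift db andbT; case: eqP.
pose q : c_epoint d1 := exist (fun q => q != cp d1) (cp d2) hp.
have cin : @tgt (contract d1) (lift_e d1 c) = inr q.
  by apply: (@rI_tgt _ d1); rewrite Lc c_in.
have cout : @src (contract d1) (lift_e d1 dd) = inr q.
  by apply: (@rI_src _ d1); rewrite Fd c_out.
have cne : (lift_e d1 c : edge (contract d1)) != lift_e d1 dd.
  apply/negP => /eqP E; move: (congr1 (rF (rI d1)) E); rewrite Fd rF_lift ca /=.
  case: (c =P ce2 d1) => [cb|/eqP ncb]; last first.
    by move=> /= cd; move: (c_ne d2); rewrite -/c -/dd cd eqxx.
  move=> /= ad; by move: hnc; rewrite cb ad !eqxx.
have cinu (x : edge (contract d1)) : tgt x = inr q -> x = lift_e d1 c.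
  move=> h; apply: (@rL_inj _ _ (rI d1)); rewrite Lc; apply: c_in_uniq.
  by rewrite (rtgt (rI d1)) h.
have coutu (x : edge (contract d1)) : src x = inr q -> x = lift_e d1 dd.
  move=> h; apply: (@rF_inj _ _ (rI d1)); rewrite Fd; apply: c_out_uniq.
  by rewrite (rsrc (rI d1)) h.
exists (CData cin cout cne cinu coutu); split => //=.
  have := rF_lift d1 c; rewrite ca /= => ->; by case: (c =P ce2 d1).
- have := rL_lift d1 dd; rewrite db andbT /= => ->.
  by case: (dd =P ce1 d1).
Qed.

Lemma logic (T : eqType) (a b c d g h : T) :
  a != b -> c != d -> a != c -> b != d -> ~~ ((b == c) && (a == d)) ->
  ((((g = h /\ g != a /\ g != b) \/ (g = a /\ h = b)) /\
     g != (if c == b then a else c) /\ g != d) \/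
   (g = (if c == b then a else c) /\ h = (if d == a then b else d))) ->
  ((((g = h /\ g != c /\ g != d) \/ (g = c /\ h = d)) /\
     g != (if a == d then c else a) /\ g != b) \/
   (g = (if a == d then c else a) /\ h = (if b == c then d else b))).
Proof.
move=> ab cd ac bd nc.
have ca : c != a by rewrite eq_sym.
have db : d != b by rewrite eq_sym.
case: (c =P b) => [cb|/eqP ncb]; case: (d =P a) => [da|/eqP nda].
- by move: nc; rewrite cb da !eqxx.
- subst c; have ad : a != d by rewrite eq_sym.
  rewrite ?eqxx ?(negbTE ad).
  move=> [[[[gh [ga gb]]|[ga hb]] [n1 n2]]|[ga hd]].
  + by left; split; [left|].
  + by move: n1; rewrite ga eqxx.
  + by right.
- subst d; have bc : b != c by rewrite eq_sym.
  rewrite ?eqxx ?(negbTE bc).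
  move=> [[[[gh [ga gb]]|[ga hb]] [n1 n2]]|[gc hb]].
  + by left; split; [left|].
  + by move: n2; rewrite ga eqxx.
  + by right.
- have ad : a != d by rewrite eq_sym.
  have bc : b != c by rewrite eq_sym.
  rewrite ?(negbTE ad) ?(negbTE bc).
  move=> [[[[gh [ga gb]]|[ga hb]] [n1 n2]]|[gc hd]].
  + by left; split; [left|].
  + by right.
  + by left; split; [right|]; rewrite gc // eq_sym.
Qed.

Lemma hasE_rI G (d : cdata G) g h : hasE (rI d) g h <->
  (g = h /\ g != ce1 d /\ g != ce2 d) \/ (g = ce1 d /\ h = ce2 d).
Proof. by rewrite /rI hasE_contract hasE_id. Qed.

Lemma hasE2 G (d : cdata G) (d' : cdata (contract d)) g h :
  hasE (real_contract (rI d) d') g h <->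
  ((((g = h /\ g != ce1 d /\ g != ce2 d) \/ (g = ce1 d /\ h = ce2 d)) /\
     g != rF (rI d) (ce1 d') /\ g != rF (rI d) (ce2 d')) \/
   (g = rF (rI d) (ce1 d') /\ h = rL (rI d) (ce2 d'))).
Proof. by rewrite hasE_contract hasE_rI. Qed.

Lemma local_confl G (d1 d2 : cdata G) : exists D1 D2,
  reaches (contract d1) D1 /\ reaches (contract d2) D2 /\ iso D1 D2.
Proof.
case: (cp d1 =P cp d2) => [hp|/eqP hp].
  exists (contract d1), (contract d2); split; first exact: reaches_refl.
  by split; [exact: reaches_refl|exact: same_cp].
case: (boolP ((ce2 d1 == ce1 d2) && (ce1 d1 == ce2 d2))) => [/andP [/eqP hb /eqP ha] | hnc].
  exists (contract d1), (contract d2); split; first exact: reaches_refl.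
  by split; [exact: reaches_refl|exact: cycle_iso].
have hp' : cp d2 != cp d1 by rewrite eq_sym.
have [d2' [F1 F2 L2 P2]] := step_data hp' hnc.
have hnc' : ~~ ((ce2 d2 == ce1 d1) && (ce1 d2 == ce2 d1)).
  by rewrite andbC eq_sym [ce2 d2 == _]eq_sym.
have [d1' [F1' F2' L2' P2']] := step_data hp hnc'.
exists (contract d2'), (contract d1'); split; first by apply: reaches_step; exact: reaches_refl.
split; first by apply: reaches_step; exact: reaches_refl.
apply: (@real_iso _ _ _ (real_contract (rI d1) d2') (real_contract (rI d2) d1')).
- by rewrite !card_contract_edge.
- by rewrite !card_contract_epoint.
- move=> g h; rewrite !hasE2 F1 F2 L2 F1' F2' L2'; apply: logic => //.
  + exact: c_ne.
  + exact: c_ne.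
  + exact: in_ne.
  + exact: out_ne.
- move=> x; rewrite !hasP_contract P2 P2' => -[[h0 h1] h2].
  by split; [split|].
Qed.

Lemma confl n : forall G, #|edge G| < n -> forall H1 H2,
  reaches G H1 -> reaches G H2 ->
  exists K1 K2, reaches H1 K1 /\ reaches H2 K2 /\ iso K1 K2.
Proof.
elim: n => [//|n IH] G hG H1 H2 r1 r2.
case: (reaches_first r1) => [E1|[d1 c1]].
  subst H1; exists H2, H2; split => //; split; [exact: reaches_refl|exact: iso_refl].
case: (reaches_first r2) => [E2|[d2 c2]].
  subst H2; exists H1, H1; split; [exact: reaches_refl|split => //; exact: iso_refl].
have [D1 [D2 [rD1 [rD2 iD]]]] := local_confl d1 d2.
have lt1 : #|edge (contract d1)| < n.
  by have := card_c_edge_lt d1; rewrite ltnS in hG; move/leq_trans; apply.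
have lt2 : #|edge (contract d2)| < n.
  by have := card_c_edge_lt d2; rewrite ltnS in hG; move/leq_trans; apply.
have [E1 [F1 [rE1 [rF1 iEF1]]]] := IH _ lt1 _ _ c1 rD1.
have [F2 [rF2 iF12]] := reaches_iso iD rF1.
have [E2 [E2' [rE2 [rE2' iE22]]]] := IH _ lt2 _ _ c2 (reaches_trans rD2 rF2).
have iF2E1 : iso F2 E1 := iso_sym (iso_trans iEF1 iF12).
have [E1' [rE1' iE2'E1']] := reaches_iso iF2E1 rE2'.
exists E1', E2; split; first exact: reaches_trans rE1 rE1'.
split => //; exact: iso_trans (iso_sym iE2'E1') (iso_sym iE22).
Qed.

Theorem proposition1 :
  (forall G : graph, open_graph G -> preceq G G) /\
  (forall K H G : graph, open_graph K -> open_graph H -> open_graph G ->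
     preceq K H -> preceq H G -> preceq K G) /\
  (forall H G : graph, open_graph H -> open_graph G ->
     preceq H G -> preceq G H -> iso G H) /\
  ~ (exists f : nat -> graph,
       (forall i, open_graph (f i)) /\
       (forall i, preceq (f i.+1) (f i) /\ ~ iso (f i.+1) (f i))) /\
  (forall G H1 H2 : graph, open_graph G -> open_graph H1 -> open_graph H2 ->
     preceq H1 G -> preceq H2 G ->
     exists K : graph, open_graph K /\ preceq K H1 /\ preceq K H2).
Proof.
split; first by move=> G _; exists G; split; [exact: reaches_refl|exact: iso_refl].
split.
  move=> K H G _ _ _ [H' [rH iK]] [G' [rG iH]].
  have [G'' [rG' iH']] := reaches_iso iH rH.
  by exists G''; split; [exact: reaches_trans rG rG'|exact: iso_trans iK iH'].
split.
  move=> H G _ _ [G' [rG iH]] [H' [rH iG]].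
  have c1 := iso_card_edge iH; have c2 := iso_card_edge iG.
  have l1 := reaches_le rG; have l2 := reaches_le rH.
  have E : #|edge G'| = #|edge G| by apply/eqP; rewrite eqn_leq l1 -c1 c2 l2.
  have := reaches_eq rG E => EG; subst G'.
  exact: iso_sym.
split.
  move=> [f [_ hf]].
  have key i : #|edge (f i)| + i <= #|edge (f 0)|.
    elim: i => [|i IHi]; first by rewrite addn0.
    apply: leq_trans IHi; rewrite addnS -addSn leq_add2r.
    case: (hf i) => [[G' [rG iG]] ni].
    case: (reaches_first rG) => [EG|[d rd]].
      by subst G'; case: ni.
    rewrite (iso_card_edge iG).
    exact: leq_ltn_trans (reaches_le rd) (card_c_edge_lt d).
  by have := key (#|edge (f 0)|).+1; rewrite addnS ltnNge leq_addl.
move=> G H1 H2 oG _ _ [H1' [r1 i1]] [H2' [r2 i2]].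
have [K1 [K2 [rK1 [rK2 iK]]]] := confl (ltnSn #|edge G|) r1 r2.
have [K1' [rK1' iK1']] := reaches_iso (iso_sym i1) rK1.
have [K2' [rK2' iK2']] := reaches_iso (iso_sym i2) rK2.
exists K1; split; first exact: open_reaches (open_reaches oG r1) rK1.
split; first by exists K1'.
by exists K2'; split => //; exact: iso_trans iK iK2'.
Qed.
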